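(* For $n\geq 1$, there is a bijection $\pi\mapsto T(\pi)$ from $\mathfrak{S}_n(2413,3142)$ to $\mathfrak{D}\mathfrak{T}_n$ such that for each $i\in[n-1]$, $$\pi_i>\pi_{i+1}\quad\Longleftrightarrow\quad\text{the $i$th node of $T(\pi)$ (in in-order) is labelled } \ominus.$$ Moreover, for $0\leq k \leq \lfloor (n-1)/2 \rfloor$, this map restricts to a bijection between $$\mathfrak{S}_{n,k}^S:= \{\pi \in \mathfrak{S}_n(3142, 2413) : \mathrm{dd}(\pi)=0,\ \mathrm{des}(\pi)=k\}$$ and $$\mathfrak{D}\mathfrak{T}_{n,k}^{2} :=\{T\in\mathfrak{D}\mathfrak{T}_n :\ T \text{ has no two consecutive nodes (in in-order) both labelled } \ominus,\ \text{its first node is labelled }\oplus,\ n_\ominus(T)=k \}.$$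
   Context: $\mathfrak{S}_n(2413,3142)$ is the set of permutations $\pi=\pi_1\cdots\pi_n$ of $[n]$ avoiding the patterns $2413$ and $3142$ (no subsequence has the same relative order as $2413$ or $3142$). With $\pi_0=\pi_{n+1}=+\infty$, $\mathrm{des}(\pi)$ is the number of $i\in[n]$ with $\pi_i>\pi_{i+1}$ and $\mathrm{dd}(\pi)$ is the number of $i\in[n]$ with $\pi_{i-1}>\pi_i>\pi_{i+1}$. A binary tree is either empty or consists of a root together with a left subtree and a right subtree, both binary trees; the root of the left (right) subtree is the left (right) child. Nodes are ordered by in-order: recursively, the left subtree, then the root, then the right subtree. A right chain of a binary tree is a maximal sequence of nodes $v_1,\dots,v_l$ in which $v_1$ is either the root or a left child and each $v_{j+1}$ is the right child of $v_j$; $l$ is its length. A di-sk tree is a binary tree whose nodes are labelled by $\oplus$ or $\ominus$ such that along every right chain the labels alternate. $\mathfrak{D}\mathfrak{T}_n$ is the set of di-sk trees with $n-1$ nodes (for $n=1$ only the empty tree), and $n_\ominus(T)$ is the number of nodes of $T$ labelled $\ominus$. *)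

(* Defs.v *)
From mathcomp Require Import all_boot all_fingroup.
Set Implicit Arguments. Unset Strict Implicit. Unset Printing Implicit Defensive.

Definition ominus : bool := true.
Definition oplus : bool := false.

Inductive btree : Type := Leaf | Node of btree & bool & btree.

Fixpoint bsize (t : btree) : nat :=
  match t with Leaf => 0 | Node l _ r => bsize l + 1 + bsize r end.

Fixpoint inorder (t : btree) : seq bool :=
  match t with Leaf => [::] | Node l b r => inorder l ++ b :: inorder r end.

Fixpoint rspine (t : btree) : seq bool :=
  match t with Leaf => [::] | Node _ b r => b :: rspine r end.

Fixpoint lchains (t : btree) : seq (seq bool) :=
  match t with
  | Leaf => [::]
  | Node l _ r =>
      (if l is Node _ _ _ then [:: rspine l] else [::]) ++ lchains l ++ lchains r
  end.

(* all right chains of t (label sequences), one per node that is the root or a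
   left child *)
Definition right_chains (t : btree) : seq (seq bool) :=
  (if t is Node _ _ _ then [:: rspine t] else [::]) ++ lchains t.

Definition alternating (c : seq bool) : bool := sorted (fun a b : bool => a != b) c.

Definition is_disk (t : btree) : bool := all alternating (right_chains t).

Definition DT (n : nat) (t : btree) : Prop := is_disk t /\ bsize t = n.-1.

Definition n_ominus (t : btree) : nat := count (fun b => b == ominus) (inorder t).

Definition DT2 (n k : nat) (t : btree) : Prop :=
  DT n t /\
  (forall i, i.+1 < size (inorder t) ->
     ~ (nth oplus (inorder t) i = ominus /\ nth oplus (inorder t) i.+1 = ominus)) /\
  (forall b, ohead (inorder t) = Some b -> b = oplus) /\
  n_ominus t = k.

(* one-line notation pi_1 ... pi_n with values in [n] (1-based) *)
Definition pseq (n : nat) (s : 'S_n) : seq nat := [seq (s i).+1 | i <- enum 'I_n].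

Definition order_iso (u v : seq nat) : Prop :=
  size u = size v /\
  forall i j, i < size u -> j < size u ->
    (nth 0 u i < nth 0 u j) = (nth 0 v i < nth 0 v j).

Definition contains (w p : seq nat) : Prop :=
  exists u, subseq u w /\ order_iso u p.

Definition sep_avoid (n : nat) (s : 'S_n) : Prop :=
  ~ contains (pseq s) [:: 2; 4; 1; 3] /\ ~ contains (pseq s) [:: 3; 1; 4; 2].

(* w padded with pi_0 = pi_{n+1} = +infinity (a value larger than all entries) *)
Definition ext (w : seq nat) : seq nat :=
  let M := (foldr maxn 0 w).+1 in M :: rcons w M.

Definition des (w : seq nat) : nat :=
  let e := ext w in
  count (fun i => nth 0 e i > nth 0 e i.+1) (iota 1 (size w)).

Definition dd (w : seq nat) : nat :=
  let e := ext w in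
  count (fun i => (nth 0 e i.-1 > nth 0 e i) && (nth 0 e i > nth 0 e i.+1))
        (iota 1 (size w)).

Definition SS (n k : nat) (s : 'S_n) : Prop :=
  sep_avoid s /\ dd (pseq s) = 0 /\ des (pseq s) = k.

(* Main.v *)
Require Import Defs.
From mathcomp Require Import all_boot all_fingroup.
From mathcomp Require Import zify.
From Stdlib Require Import ClassicalEpsilon.
Set Implicit Arguments. Unset Strict Implicit. Unset Printing Implicit Defensive.


Fixpoint sq (t : btree) : seq nat :=
  match t with
  | Leaf => [:: 1]
  | Node l b r =>
      if b then map (addn (size (sq r))) (sq l) ++ sq r
      else sq l ++ map (addn (size (sq l))) (sq r)
  end.

Lemma size_S t : size (sq t) = (bsize t).+1.
Proof.
elim: t => [|l IHl b r IHr] //=.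
case: b; rewrite size_cat size_map IHl IHr; lia.
Qed.

Definition stdp (w : seq nat) := perm_eq w (iota 1 (size w)).

Lemma stdp_S t : stdp (sq t).
Proof.
rewrite /stdp; elim: t => [|l IHl b r IHr] //=.
case: b; rewrite size_cat size_map.
- rewrite perm_catC.
  have -> : size (sq l) + size (sq r) = size (sq r) + size (sq l) by lia.
  rewrite iotaD perm_cat //. rewrite -[1 + _]addnC iotaDl perm_map //.
- rewrite iotaD perm_cat //. rewrite -[1 + _]addnC iotaDl perm_map //.
Qed.

Lemma test (a b : nat) : a < b -> (b < a) = false.
Proof. lia. Qed.

Lemma mem_stdp w x : stdp w -> x \in w -> 0 < x <= size w.
Proof.
move=> H; rewrite (perm_mem H) mem_iota; lia.
Qed.

Lemma size_inorder t : size (inorder t) = bsize t.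
Proof. elim: t => [|l IHl b r IHr] //=; rewrite size_cat /= IHl IHr; lia. Qed.

Lemma nth_S_bound t i : i < size (sq t) -> 0 < nth 0 (sq t) i <= size (sq t).
Proof. move=> Hi; apply: mem_stdp (stdp_S t) _; exact: mem_nth. Qed.

Lemma desc_S t i : i < bsize t ->
  (nth 0 (sq t) i.+1 < nth 0 (sq t) i) = nth false (inorder t) i.
Proof.
elim: t i => [|l IHl b r IHr] i //= Hi.
have sl := size_S l; have sr := size_S r; have il := size_inorder l.
rewrite nth_cat il.
case: b.
- rewrite !nth_cat size_map.
  case: (ltngtP i (bsize l)) => Hil.
  + rewrite ifT; last lia. rewrite ifT; last lia.
    rewrite (nth_map 0); last lia. rewrite (nth_map 0); last lia.
    rewrite ltn_add2l; exact: IHl.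
  + rewrite ifF; last lia. rewrite ifF; last lia.
    have -> : i - bsize l = (i - bsize l - 1).+1 by lia.
    rewrite /=.
    have -> : i.+1 - size (sq l) = (i - bsize l - 1).+1 by lia.
    have -> : i - size (sq l) = (i - bsize l - 1) by lia.
    apply: IHr; lia.
  + subst i. rewrite ifF; last lia. rewrite ifT; last lia. rewrite subnn /=.
    have -> : (bsize l).+1 - size (sq l) = 0 by lia.
    rewrite (nth_map 0); last lia.
    have : 0 < size (sq r) by lia.
    have : bsize l < size (sq l) by lia.
    move=> /nth_S_bound H1 /nth_S_bound H2. lia.
- rewrite !nth_cat.
  case: (ltngtP i (bsize l)) => Hil.
  + rewrite ifT; last lia. rewrite ifT; last lia. exact: IHl.
  + rewrite ifF; last lia. rewrite ifF; last lia.
    have -> : i - bsize l = (i - bsize l - 1).+1 by lia.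
    rewrite /=.
    have -> : i.+1 - size (sq l) = (i - bsize l - 1).+1 by lia.
    have -> : i - size (sq l) = (i - bsize l - 1) by lia.
    rewrite (nth_map 0); last lia. rewrite (nth_map 0); last lia.
    rewrite ltn_add2l; apply: IHr; lia.
  + subst i. rewrite ifF; last lia. rewrite ifT; last lia. rewrite subnn /=.
    have -> : (bsize l).+1 - size (sq l) = 0 by lia.
    rewrite (nth_map 0); last lia.
    have : 0 < size (sq r) by lia.
    have : bsize l < size (sq l) by lia.
    move=> /nth_S_bound H1 /nth_S_bound H2. lia.
Qed.


Lemma is_disk_node l b r : is_disk (Node l b r) =
  [&& is_disk l, is_disk r & (if r is Node _ c _ then b != c else true)].
Proof.
rewrite /is_disk /right_chains /=.
case: l => [|ll lb lr]; case: r => [|rl rb rr] /=;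
  rewrite ?all_cat /= ?andbT /alternating /=; try by [].
all: try generalize (b != rb).
all: repeat match goal with |- context [all ?f ?s] => generalize (all f s) end.
all: repeat match goal with |- context [path ?f ?x ?s] => generalize (path f x s) end.
all: by do ! case.
Qed.

Lemma S_nil t : sq t != [::].
Proof. by rewrite -size_eq0 size_S. Qed.

Lemma fl_node l b r :
  (nth 0 (sq (Node l b r)) (size (sq (Node l b r))).-1 < nth 0 (sq (Node l b r)) 0) = b.
Proof.
have sl := size_S l; have sr := size_S r.
case: b => /=; rewrite size_cat size_map !nth_cat ?size_map.
- rewrite ifF; last lia. rewrite ifT; last lia. rewrite (nth_map 0); last lia.
  have : (size (sq l) + size (sq r)).-1 - size (sq l) < size (sq r) by lia.
  have : 0 < size (sq l) by lia.
  move=> /nth_S_bound H1 /nth_S_bound H2. lia.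
- rewrite ifF; last lia. rewrite ifT; last lia. rewrite (nth_map 0); last lia.
  have : (size (sq l) + size (sq r)).-1 - size (sq l) < size (sq r) by lia.
  have : 0 < size (sq l) by lia.
  move=> /nth_S_bound H1 /nth_S_bound H2. lia.
Qed.

Lemma plus_contra l1 r1 l2 r2 :
  sq l1 ++ map (addn (size (sq l1))) (sq r1) = sq l2 ++ map (addn (size (sq l2))) (sq r2) ->
  size (sq l1) < size (sq l2) ->
  1 < size (sq r1) /\ nth 0 (sq r1) 0 < nth 0 (sq r1) (size (sq r1)).-1.
Proof.
move=> E Hlt.
have sz := congr1 size E; rewrite !size_cat !size_map in sz.
have s1 := size_S r1; have s2 := size_S r2.
split; first lia.
have E1 := congr1 (fun s => nth 0 s (size (sq l1))) E.
have E2 := congr1 (fun s => nth 0 s (size (sq l1) + size (sq r1)).-1) E.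
move: E1 E2 => /=; rewrite !nth_cat ?size_map.
rewrite ltnn subnn ifT // ifF; last lia. rewrite ifF; last lia.
rewrite (nth_map 0); last lia. rewrite (nth_map 0); last lia. rewrite (nth_map 0); last lia.
have : (size (sq l1) + size (sq r1)).-1 - size (sq l2) < size (sq r2) by lia.
have : size (sq l1) < size (sq l2) by lia.
move=> /nth_S_bound H1 /nth_S_bound H2.
have -> : (size (sq l1) + size (sq r1)).-1 - size (sq l1) = (size (sq r1)).-1 by lia.
lia.
Qed.

Lemma minus_contra l1 r1 l2 r2 :
  map (addn (size (sq r1))) (sq l1) ++ sq r1 = map (addn (size (sq r2))) (sq l2) ++ sq r2 ->
  size (sq l1) < size (sq l2) ->
  1 < size (sq r1) /\ nth 0 (sq r1) (size (sq r1)).-1 < nth 0 (sq r1) 0.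
Proof.
move=> E Hlt.
have sz := congr1 size E; rewrite !size_cat !size_map in sz.
have s1 := size_S r1; have s2 := size_S r2.
split; first lia.
have E1 := congr1 (fun s => nth 0 s (size (sq l1))) E.
have E2 := congr1 (fun s => nth 0 s (size (sq l1) + size (sq r1)).-1) E.
move: E1 E2 => /=; rewrite !nth_cat ?size_map.
rewrite ltnn subnn Hlt /=. rewrite ifF; last lia. rewrite ifF; last lia.
rewrite (nth_map 0); last lia.
have : (size (sq l1) + size (sq r1)).-1 - size (sq l2) < size (sq r2) by lia.
have : size (sq l1) < size (sq l2) by lia.
move=> /nth_S_bound H1 /nth_S_bound H2.
have -> : (size (sq l1) + size (sq r1)).-1 - size (sq l1) = (size (sq r1)).-1 by lia.
lia.
Qed.

Lemma chain_contra b r : (if r is Node _ c _ then b != c else true) ->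
  1 < size (sq r) ->
   (if b then nth 0 (sq r) (size (sq r)).-1 < nth 0 (sq r) 0
    else nth 0 (sq r) 0 < nth 0 (sq r) (size (sq r)).-1) -> False.
Proof.
case: r => [|x c y]; first by [].
have := fl_node x c y; generalize (sq (Node x c y)) => s.
case: b; case: c => //= F _ _ H; lia.
Qed.

Lemma S_inj t1 t2 : is_disk t1 -> is_disk t2 -> sq t1 = sq t2 -> t1 = t2.
Proof.
elim: t1 t2 => [|l1 IHl b1 r1 IHr] [|l2 b2 r2] //.
- move=> _ _ E; have := congr1 size E; rewrite !size_S /=. lia.
- move=> _ _ E; have := congr1 size E; rewrite !size_S /=. lia.
rewrite !is_disk_node => /and3P [d1l d1r c1] /and3P [d2l d2r c2] E.
have hb : b1 = b2 by rewrite -(fl_node l1 b1 r1) -(fl_node l2 b2 r2) E.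
subst b2.
have nr1 := @chain_contra b1 r1 c1.
have nr2 := @chain_contra b1 r2 c2.
clear c1 c2.
have ha : size (sq l1) = size (sq l2).
  case: (ltngtP (size (sq l1)) (size (sq l2))) => // H;
  move: E nr1 nr2; case: b1 => /= E nr1 nr2.
    + by case: (minus_contra E H) => ? ?; exfalso; exact: nr1.
    + by case: (plus_contra E H) => ? ?; exfalso; exact: nr1.
    + by case: (minus_contra (esym E) H) => ? ?; exfalso; exact: nr2.
    + by case: (plus_contra (esym E) H) => ? ?; exfalso; exact: nr2.
have sz := congr1 size E.
move: E sz nr1 nr2; case: b1 => /= E sz _ _; rewrite !size_cat !size_map in sz.
- have hc : size (sq r1) = size (sq r2) by lia.
  move/eqP: E; rewrite eqseq_cat ?size_map // => /andP [/eqP E1 /eqP E2].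
  rewrite hc in E1; move/(inj_map (@addnI (size (sq r2)))): E1 => E1.
  by rewrite (IHl l2) // (IHr r2).
- move/eqP: E; rewrite eqseq_cat ?size_map // => /andP [/eqP E1 /eqP E2].
  rewrite ha in E2; move/(inj_map (@addnI (size (sq l2)))): E2 => E2.
  by rewrite (IHl l2) // (IHr r2).
Qed.


Definition p1 := [:: 2; 4; 1; 3].
Definition p2 := [:: 3; 1; 4; 2].
Definition avoid w := ~ contains w p1 /\ ~ contains w p2.

Lemma contains_sub w w' p : subseq w w' -> contains w p -> contains w' p.
Proof. move=> H [u [Hu Hi]]; exists u; split => //; exact: subseq_trans H. Qed.

Lemma avoid_sub w w' : subseq w w' -> avoid w' -> avoid w.
Proof. by move=> H [A B]; split => C; [apply: A|apply: B]; apply: contains_sub C. Qed.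

Lemma order_iso_shift k u p : order_iso (map (addn k) u) p <-> order_iso u p.
Proof.
rewrite /order_iso size_map; split => -[Hs H]; split => // i j Hi Hj; rewrite -H //.
- by rewrite !(nth_map 0) // ltn_add2l.
- by rewrite !(nth_map 0) // ltn_add2l.
Qed.

Lemma contains_shift k w p : contains (map (addn k) w) p <-> contains w p.
Proof.
split.
- move=> [u [/subseqP [m Hm Hu] Hi]].
  exists (mask m w); split; first exact: mask_subseq.
  by apply/(order_iso_shift k); rewrite map_mask -Hu.
- move=> [u [Hu Hi]]; exists (map (addn k) u); split; first exact: map_subseq.
  exact/order_iso_shift.
Qed.

Lemma avoid_shift k w : avoid (map (addn k) w) <-> avoid w.
Proof. by rewrite /avoid !contains_shift. Qed.

Lemma pat_simple p x1 x2 : (p = p1 \/ p = p2) -> order_iso (x1 ++ x2) p ->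
  ({in x1 & x2, forall a b, a < b} \/ {in x1 & x2, forall a b, b < a}) ->
  x1 = [::] \/ x2 = [::].
Proof.
move=> Hp [Hs Ho] Hr.
case E1: x1 => [|a1 s1]; first by left.
case E2: x2 => [|a2 s2]; first by right.
exfalso.
have Hsz : size x1 + size x2 = 4 by rewrite -size_cat Hs; case: Hp => ->.
have k1 : 0 < size x1 by rewrite E1.
have k2 : 0 < size x2 by rewrite E2.
have key : forall i j, i < size x1 -> size x1 <= j < 4 ->
   (nth 0 (x1 ++ x2) i < nth 0 (x1 ++ x2) j) = (nth 0 x1 i < nth 0 x2 (j - size x1)).
  move=> i j Hi /andP [Hj1 Hj2]; rewrite !nth_cat Hi /= ifF //; clear -Hj1; lia.
have mi : forall i, i < size x1 -> nth 0 x1 i \in x1 by move=> i Hi; exact: mem_nth.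
have mj : forall j, size x1 <= j < 4 -> nth 0 x2 (j - size x1) \in x2.
  move=> j /andP [Hj1 Hj2]; have Hl : j - size x1 < size x2 by lia. exact: mem_nth.
have Hs' : size (x1 ++ x2) = 4 by rewrite size_cat.
case: Hr => Hr.
- have H : forall i j, i < size x1 -> size x1 <= j < 4 -> nth 0 p i < nth 0 p j.
    move=> i j Hi Hj; have /andP [Hj1 Hj2] := Hj; rewrite -Ho; try lia.
    by rewrite key // Hr //; [apply: mi | apply: mj].
  move: H k1 k2 Hsz; case: (size x1) => [|[|[|[|?]]]] H ? ? ?; try (exfalso; lia);
  case: Hp => ?; subst p.
  + by have := H 0 2 isT isT.
  + by have := H 0 3 isT isT.
  + by have := H 1 2 isT isT.
  + by have := H 0 3 isT isT.
  + by have := H 1 3 isT isT.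
  + by have := H 0 3 isT isT.
- have H : forall i j, i < size x1 -> size x1 <= j < 4 -> nth 0 p j < nth 0 p i.
    move=> i j Hi Hj; have /andP [Hj1 Hj2] := Hj; rewrite -Ho; try lia.
    by rewrite !nth_cat Hi /= ifF; [apply: Hr; [apply: mi | apply: mj] | lia].
  move: H k1 k2 Hsz; case: (size x1) => [|[|[|[|?]]]] H ? ? ?; try (exfalso; lia);
  case: Hp => ?; subst p.
  + by have := H 0 1 isT isT.
  + by have := H 0 2 isT isT.
  + by have := H 0 3 isT isT.
  + by have := H 1 2 isT isT.
  + by have := H 2 3 isT isT.
  + by have := H 1 3 isT isT.
Qed.

Lemma contains_cat u v p : (p = p1 \/ p = p2) ->
  ({in u & v, forall a b, a < b} \/ {in u & v, forall a b, b < a}) ->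
  contains (u ++ v) p -> contains u p \/ contains v p.
Proof.
move=> Hp Hr [x [/subseqP [m Hm Hx] Hiso]].
have Hm' : m = take (size u) m ++ drop (size u) m by rewrite cat_take_drop.
rewrite Hm' mask_cat in Hx; last by rewrite size_takel // Hm size_cat leq_addr.
set x1 := mask _ u in Hx; set x2 := mask _ v in Hx.
have s1 : subseq x1 u := mask_subseq _ _.
have s2 : subseq x2 v := mask_subseq _ _.
have Hr' : {in x1 & x2, forall a b, a < b} \/ {in x1 & x2, forall a b, b < a}.
  case: Hr => H; [left|right] => a b Ha Hb; apply: H;
    by [apply: (mem_subseq s1) | apply: (mem_subseq s2)].
rewrite Hx in Hiso.
case: (pat_simple Hp Hiso Hr') => E.
- right; exists x2; split => //; by rewrite E in Hiso.
- left; exists x1; split => //; by rewrite E cats0 in Hiso.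
Qed.

Lemma avoid_S t : avoid (sq t).
Proof.
elim: t => [|l [A1 A2] b r [B1 B2]].
- split => -[u [Hu [Hs _]]]; have := size_subseq Hu; by rewrite Hs.
have sl := size_S l; have sr := size_S r.
have bl : forall x, x \in sq l -> 0 < x <= size (sq l) by move=> x; apply: mem_stdp; exact: stdp_S.
have br : forall x, x \in sq r -> 0 < x <= size (sq r) by move=> x; apply: mem_stdp; exact: stdp_S.
case: b => /=.
- have Hr : {in map (addn (size (sq r))) (sq l) & sq r, forall a b, b < a} .
    move=> a c /mapP [a' Ha' ->] Hc; have := bl _ Ha'; have := br _ Hc; lia.
  split => C.
  + case: (contains_cat (or_introl erefl) (or_intror Hr) C) => //.
    by move/contains_shift.
  + case: (contains_cat (or_intror erefl) (or_intror Hr) C) => //.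
    by move/contains_shift.
- have Hr : {in sq l & map (addn (size (sq l))) (sq r), forall a b, a < b} .
    move=> a c Ha /mapP [c' Hc' ->]; have := bl _ Ha; have := br _ Hc'; lia.
  split => C.
  + case: (contains_cat (or_introl erefl) (or_introl Hr) C) => //.
    by move/contains_shift.
  + case: (contains_cat (or_intror erefl) (or_introl Hr) C) => //.
    by move/contains_shift.
Qed.


Lemma split_q (q : pred nat) A :
  (exists A1 A2, A = A1 ++ A2 /\ all q A1 /\ all (predC q) A2) \/
  (exists A0 a A1 a', A = A0 ++ a :: A1 /\ ~~ q a /\ a' \in A1 /\ q a').
Proof.
elim: A => [|y A IH]; first by left; exists [::], [::].
case: IH => [[A1 [A2 [-> [H1 H2]]]] | [A0 [a [A1 [a' [-> [H1 [H2 H3]]]]]]]].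
- case Hy: (q y).
  + by left; exists (y :: A1), A2; rewrite /= Hy.
  + case: A1 H1 => [|z A1] H1.
    * by left; exists [::], (y :: A2); rewrite /= Hy.
    * right; exists [::], y, (z :: A1 ++ A2), z; rewrite Hy mem_head.
      by move: H1 => /= /andP [-> _].
- by right; exists (y :: A0), a, A1, a'.
Qed.

Lemma iso_3142 a a' b x : a' < x -> x < a -> a < b -> order_iso [:: a; a'; b; x] p2.
Proof.
move=> h1 h2 h3; split => // i j Hi Hj.
case: i Hi => [|[|[|[|i]]]] //= _; case: j Hj => [|[|[|[|j]]]] //= _; lia.
Qed.

Lemma iso_2413 a a' b x : b < a -> a < x -> x < a' -> order_iso [:: a; a'; b; x] p1.
Proof.
move=> h1 h2 h3; split => // i j Hi Hj.
case: i Hi => [|[|[|[|i]]]] //= _; case: j Hj => [|[|[|[|j]]]] //= _; lia.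
Qed.

Lemma sub4 (A0 A1 B' : seq nat) (a a' b x : nat) : a' \in A1 ->
  subseq [:: a; a'; b; x] (A0 ++ a :: A1 ++ rcons (b :: B') x).
Proof.
move=> Ha'.
have h1 : subseq [:: a; a'] (A0 ++ a :: A1).
  rewrite -[[:: a; a']]cat0s; apply: cat_subseq; first exact: sub0seq.
  by rewrite /= eqxx sub1seq.
have h2 : subseq [:: b; x] (rcons (b :: B') x).
  by rewrite /= eqxx sub1seq mem_rcons mem_head.
by have := cat_subseq h1 h2; rewrite -catA.
Qed.

Definition dec (w u v : seq nat) :=
  w = u ++ v /\ u != [::] /\ v != [::] /\
  ({in u & v, forall a b, a < b} \/ {in u & v, forall a b, b < a}).

Lemma decomp w : uniq w -> 1 < size w -> avoid w -> exists u v, dec w u v.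
Proof.
elim/last_ind: w => [|w x IH] //.
rewrite rcons_uniq size_rcons => /andP [xw Uw] Hs Ha.
have Aw : avoid w := avoid_sub (subseq_rcons w x) Ha.
case: (ltngtP (size w) 1) => Hsw; first by lia.
2: { case: w Hsw xw {IH Uw Ha Aw Hs} => [|y [|]] //= _; rewrite inE => yx.
     exists [:: y], [:: x]; rewrite /dec; split => //; split => //; split => //.
     case: (ltngtP y x) => h.
     - by left => a b; rewrite !inE => /eqP -> /eqP ->.
     - by right => a b; rewrite !inE => /eqP -> /eqP ->.
     - by rewrite h eqxx in yx. }
have [A [B [Ew [nA [nB Hr]]]]] := IH Uw Hsw Aw; subst w; clear IH Uw Hsw Aw Hs.
rewrite mem_cat negb_or in xw; case/andP: xw => xA xB.
case: B nB Hr xB Ha => [|b B'] // _ Hr xB Ha.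
set B := b :: B' in Hr xB Ha *.
rewrite rcons_cat.
case: A nA Hr xA Ha => [|a0 A'] // _ Hr xA Ha.
set A := a0 :: A' in Hr xA Ha *.
have a0A : a0 \in A by rewrite mem_head.
have bB : b \in B by rewrite mem_head.
have neqx : forall c, c \in A -> c != x by move=> c cA; apply: contraNneq xA => <-.
case: Hr => Hr.
-
  case Hall: (all (fun a => a < x) A).
    exists A, (rcons B x); rewrite /dec; split => //; split => //; split; first by rewrite -size_eq0 size_rcons.
    left => a c aA; rewrite mem_rcons inE => /orP [/eqP -> | cB].
    + exact: (allP Hall).
    + exact: Hr.
  case Hall2: (all (fun a => x < a) A).
    exists (A ++ B), [:: x]; rewrite /dec -cats1 catA; split => //; split; first by rewrite -size_eq0 size_cat.
    split => //; right => a c; rewrite mem_cat inE => /orP [aA|aB] /eqP ->.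
    + exact: (allP Hall2).
    + have := allP Hall2 _ a0A; have := Hr _ _ a0A aB; lia.
  have [e1 e1A e1x] : exists2 e, e \in A & x < e.
    move/negbT: Hall => /allPn [e eA He]; exists e => //; have := neqx _ eA; lia.
  have [e2 e2A e2x] : exists2 e, e \in A & e < x.
    move/negbT: Hall2 => /allPn [e eA He]; exists e => //; have := neqx _ eA; lia.
  case: (split_q (fun a => a < x) A) => [[A1 [A2 [EA [H1 H2]]]] | [A0 [a [A1 [a' [EA [H1 [H2 H3]]]]]]]].
  + exists A1, (A2 ++ rcons B x); rewrite /dec catA -EA; split => //; split.
      case: A1 EA H1 => // EA _; rewrite /= in EA; rewrite EA in e2A.
      by move: (allP H2 _ e2A) => /=; rewrite e2x.
    split; first by rewrite -size_eq0 size_cat size_rcons; lia.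
    left => u c uA1; rewrite mem_cat mem_rcons inE => /or3P [cA2|/eqP ->|cB].
    * have := allP H1 _ uA1; have := allP H2 _ cA2; rewrite /=; lia.
    * exact: (allP H1).
    * apply: Hr => //; by rewrite EA mem_cat uA1.
  + exfalso; case: Ha => _; apply.
    exists [:: a; a'; b; x]; split.
    * by rewrite EA -catA /= !rcons_cat /= rcons_cat; apply: sub4.
    * have aA : a \in A by rewrite EA mem_cat mem_head orbT.
      apply: iso_3142 => //; last exact: Hr.
      have := neqx _ aA; move: H1 => /=; lia.
-
  case Hall: (all (fun a => x < a) A).
    exists A, (rcons B x); rewrite /dec; split => //; split => //; split; first by rewrite -size_eq0 size_rcons.
    right => a c aA; rewrite mem_rcons inE => /orP [/eqP -> | cB].
    + exact: (allP Hall).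
    + exact: Hr.
  case Hall2: (all (fun a => a < x) A).
    exists (A ++ B), [:: x]; rewrite /dec -cats1 catA; split => //; split; first by rewrite -size_eq0 size_cat.
    split => //; left => a c; rewrite mem_cat inE => /orP [aA|aB] /eqP ->.
    + exact: (allP Hall2).
    + have := allP Hall2 _ a0A; have := Hr _ _ a0A aB; lia.
  have [e1 e1A e1x] : exists2 e, e \in A & e < x.
    move/negbT: Hall => /allPn [e eA He]; exists e => //; have := neqx _ eA; lia.
  have [e2 e2A e2x] : exists2 e, e \in A & x < e.
    move/negbT: Hall2 => /allPn [e eA He]; exists e => //; have := neqx _ eA; lia.
  case: (split_q (fun a => x < a) A) => [[A1 [A2 [EA [H1 H2]]]] | [A0 [a [A1 [a' [EA [H1 [H2 H3]]]]]]]].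
  + exists A1, (A2 ++ rcons B x); rewrite /dec catA -EA; split => //; split.
      case: A1 EA H1 => // EA _; rewrite /= in EA; rewrite EA in e2A.
      by move: (allP H2 _ e2A) => /=; rewrite e2x.
    split; first by rewrite -size_eq0 size_cat size_rcons; lia.
    right => u c uA1; rewrite mem_cat mem_rcons inE => /or3P [cA2|/eqP ->|cB].
    * have := allP H1 _ uA1; have := allP H2 _ cA2; rewrite /=; lia.
    * exact: (allP H1).
    * apply: Hr => //; by rewrite EA mem_cat uA1.
  + exfalso; case: Ha => Ha _; apply: Ha.
    exists [:: a; a'; b; x]; split.
    * by rewrite EA -catA /= !rcons_cat /= rcons_cat; apply: sub4.
    * have aA : a \in A by rewrite EA mem_cat mem_head orbT.
      apply: iso_2413 => //; first exact: Hr.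
      have := neqx _ aA; move: H1 => /=; lia.
Qed.


Lemma range_perm (s : seq nat) a : uniq s -> (forall x : nat, x \in s -> a < x <= a + size s) ->
  perm_eq s (iota a.+1 (size s)).
Proof.
move=> U H.
have H1 : {subset s <= iota a.+1 (size s)} by move=> x /H; rewrite mem_iota; lia.
have H2 : size (iota a.+1 (size s)) <= size s by rewrite size_iota.
have [_ E] := uniq_min_size U H1 H2.
by apply: uniq_perm => //; exact: iota_uniq.
Qed.

Lemma shift_std s a : perm_eq s (iota a.+1 (size s)) ->
  exists s', s = map (addn a) s' /\ stdp s'.
Proof.
move=> H; exists (map (subn^~ a) s); split.
- rewrite -map_comp -[LHS]map_id; apply/eq_in_map => x /=.
  rewrite (perm_mem H) mem_iota => Hx; lia.
- rewrite /stdp size_map.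
  have E : map (subn^~ a) (iota a.+1 (size s)) = iota 1 (size s).
    rewrite -addn1 iotaDl -map_comp -[RHS]map_id; apply: eq_map => x /=; lia.
  by rewrite -E; apply: perm_map.
Qed.

Lemma low_block (p r : seq nat) x : uniq p ->
  (forall y, 0 < y <= x -> y \in p ++ r) -> {in p & r, forall a b, a < b} ->
  x \in p -> x <= size p.
Proof.
move=> U Hy Hr xp.
have -> : x = size (iota 1 x) by rewrite size_iota.
apply: uniq_leq_size; first exact: iota_uniq.
move=> y; rewrite mem_iota => Hy1.
have : y \in p ++ r by apply: Hy; lia.
rewrite mem_cat => /orP [//|yr].
have := Hr _ _ xp yr; lia.
Qed.

Lemma perm_split_lt (p q : seq nat) : perm_eq (p ++ q) (iota 1 (size p + size q)) ->
  {in p & q, forall a b, a < b} ->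
  stdp p /\ exists q', q = map (addn (size p)) q' /\ stdp q'.
Proof.
move=> H Hr.
have U : uniq (p ++ q) by rewrite (perm_uniq H) iota_uniq.
have Hm : forall y, y \in p ++ q = (0 < y <= size p + size q).
  by move=> y; rewrite (perm_mem H) mem_iota; apply/idP/idP; lia.
move: (U); rewrite cat_uniq => /and3P [Up Hpq Uq].
have Pp : stdp p.
  rewrite /stdp (range_perm (a := 0)) // => x xp.
  have := Hm x; rewrite mem_cat xp /= => /esym Hx.
  move/andP: Hx => [Hx1 Hx2].
  suff : x <= size p by lia.
  apply: (low_block Up _ Hr xp) => y Hy; rewrite Hm; lia.
split => //.
apply: shift_std; apply: range_perm => // x xq.
have := Hm x; rewrite mem_cat xq orbT => /esym /andP [Hx1 Hx2].
case: (leqP x (size p)) => Hxp; last lia.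
exfalso; move/hasPn: Hpq => /(_ x xq) /=.
by rewrite (perm_mem Pp) mem_iota; lia.
Qed.

Lemma perm_split_gt (p q : seq nat) : perm_eq (p ++ q) (iota 1 (size p + size q)) ->
  {in p & q, forall a b, b < a} ->
  stdp q /\ exists p', p = map (addn (size q)) p' /\ stdp p'.
Proof.
move=> H Hr.
have H' : perm_eq (q ++ p) (iota 1 (size q + size p)).
  by rewrite perm_catC addnC.
apply: perm_split_lt => // a b aq bp; exact: Hr.
Qed.

Lemma exists_tree n : forall w : seq nat, size w = n -> 0 < n -> stdp w -> avoid w ->
  exists t, is_disk t /\ sq t = w.
Proof.
elim/ltn_ind: n => n IH w Hs Hn Pw Aw.
have Uw : uniq w by rewrite (perm_uniq Pw) iota_uniq.
case: (ltngtP n 1) => Hn1; first lia.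
- have Hw1 : 1 < size w by lia.
  have [u [v [Ew [nu [nv Hr]]]]] := decomp Uw Hw1 Aw.
  have Hsz : size w = size u + size v by rewrite Ew size_cat.
  have su : 0 < size u by rewrite lt0n size_eq0.
  have sv : 0 < size v by rewrite lt0n size_eq0.
  move: Pw; rewrite /stdp Ew size_cat => Pw.
  have Au : avoid u by apply: avoid_sub Aw; rewrite Ew prefix_subseq.
  have Av : avoid v by apply: avoid_sub Aw; rewrite Ew suffix_subseq.
  case: Hr => Hr.
  + have [Pu [v' [Ev Pv']]] := perm_split_lt Pw Hr.
    have Av' : avoid v' by rewrite -(avoid_shift (size u)) -Ev.
    have [tu [Du Su]] := IH (size u) (ltac:(lia)) u erefl su Pu Au.
    have sv' : size v' = size v by rewrite Ev size_map.
    have [tv [Dv Sv]] := IH (size v') (ltac:(lia)) v' erefl (ltac:(lia)) Pv' Av'.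
    case Etv : tv Dv Sv => [|L c R] Dv Sv.
    * exists (Node tu false Leaf); rewrite is_disk_node Du /=; split => //.
      by rewrite Ev -Sv -Su.
    * case: c Etv Dv Sv => Etv Dv Sv.
      - exists (Node tu false (Node L true R)); rewrite is_disk_node Du Dv /=; split => //.
        by rewrite Ev -Sv -Su.
      - move: (Dv); rewrite is_disk_node => /and3P [DL DR cR].
        set P := sq (Node tu false L).
        have sP : size P < n.
          rewrite /P /= size_cat size_map !size_S.
          have := congr1 size Sv; rewrite !size_S /= => H.
          have := congr1 size Su; rewrite !size_S => H2.
          lia.
        have [t1 [D1 S1]] := IH (size P) sP P erefl (ltac:(rewrite size_S; lia)) (stdp_S _) (avoid_S _).
        exists (Node t1 false R); rewrite is_disk_node D1 DR cR; split => //.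
        rewrite /= S1 /P /= Ev -Sv /= Su map_cat -catA; congr (_ ++ _).
        rewrite size_cat size_map -map_comp; congr (_ ++ _).
        by apply: eq_map => x /=; lia.
  + have [Pv [u' [Eu Pu']]] := perm_split_gt Pw Hr.
    have Au' : avoid u' by rewrite -(avoid_shift (size v)) -Eu.
    have [tv [Dv Sv]] := IH (size v) (ltac:(lia)) v erefl sv Pv Av.
    have su' : size u' = size u by rewrite Eu size_map.
    have [tu [Du Su]] := IH (size u') (ltac:(lia)) u' erefl (ltac:(lia)) Pu' Au'.
    case Etv : tv Dv Sv => [|L c R] Dv Sv.
    * exists (Node tu true Leaf); rewrite is_disk_node Du /=; split => //.
      by rewrite Eu -Sv -Su.
    * case: c Etv Dv Sv => Etv Dv Sv.
      - move: (Dv); rewrite is_disk_node => /and3P [DL DR cR].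
        set P := sq (Node tu true L).
        have sP : size P < n.
          rewrite /P /= size_cat size_map !size_S.
          have := congr1 size Sv; rewrite !size_S /= => H.
          have := congr1 size Su; rewrite !size_S => H2.
          lia.
        have [t1 [D1 S1]] := IH (size P) sP P erefl (ltac:(rewrite size_S; lia)) (stdp_S _) (avoid_S _).
        exists (Node t1 true R); rewrite is_disk_node D1 DR cR; split => //.
        rewrite /= S1 /P /= Eu -Sv /= Su map_cat catA; congr (_ ++ _).
        rewrite size_cat size_map -!map_comp; congr (_ ++ _).
        by apply: eq_map => x /=; lia.
      - exists (Node tu true (Node L false R)); rewrite is_disk_node Du Dv /=; split => //.
        by rewrite Eu -Sv -Su.
- rewrite Hn1 in Hs; case: w Hs Pw Uw Aw => [|y [|]] // _ Pw _ _.
  exists Leaf; split => //.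
  have : y \in iota 1 1 by rewrite -(perm_mem Pw) mem_head.
  by rewrite /= inE => /eqP ->.
Qed.


Lemma size_pseq n (s : 'S_n) : size (pseq s) = n.
Proof. by rewrite /pseq size_map size_enum_ord. Qed.

Lemma pseq_std n (s : 'S_n) : stdp (pseq s).
Proof.
rewrite /stdp size_pseq /pseq.
have E : perm_eq [seq s i | i <- enum 'I_n] (enum 'I_n).
  apply: uniq_perm; first by rewrite (map_inj_uniq perm_inj) enum_uniq.
    exact: enum_uniq.
  move=> x; rewrite mem_enum; apply/mapP; exists (s^-1 x)%g; first by rewrite mem_enum.
  by rewrite permKV.
have E2 := perm_map (fun i : 'I_n => (val i).+1) E.
rewrite -map_comp in E2.
apply: (perm_trans E2).
have -> : [seq (val i).+1 | i <- enum 'I_n] = map succn (map val (enum 'I_n)) by rewrite -map_comp.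
have -> : iota 1 n = map succn (iota 0 n).
  by rewrite -[1]/(1 + 0) iotaDl; apply: eq_map => x; rewrite add1n.
by rewrite val_enum_ord perm_refl.
Qed.

Lemma pseq_inj n (s1 s2 : 'S_n) : pseq s1 = pseq s2 -> s1 = s2.
Proof.
move=> /eq_in_map H; apply/permP => i.
by have /(_ (mem_enum _ i)) [/val_inj] := H i.
Qed.

Lemma nth_stdp (w : seq nat) i : stdp w -> i < size w -> 0 < nth 0 w i <= size w.
Proof. move=> H Hi; exact: (mem_stdp H (mem_nth 0 Hi)). Qed.

Lemma pseq_surj n (w : seq nat) : size w = n -> stdp w -> exists s : 'S_n, pseq s = w.
Proof.
move=> Hs Pw.
have Uw : uniq w by rewrite (perm_uniq Pw) iota_uniq.
have B : forall i : 'I_n, (nth 0 w i).-1 < n.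
  move=> i; have Hi : (i : nat) < size w by rewrite Hs.
  have := nth_stdp Pw Hi; rewrite Hs; lia.
pose f := fun i : 'I_n => Ordinal (B i).
have finj : injective f.
  move=> i j /(congr1 val) /= E.
  have Hi : (i : nat) < size w by rewrite Hs.
  have Hj : (j : nat) < size w by rewrite Hs.
  have := nth_stdp Pw Hi; have := nth_stdp Pw Hj => H1 H2.
  have Eq : nth 0 w i = nth 0 w j :> nat by lia.
  apply: val_inj; apply/eqP; rewrite -(nth_uniq 0 Hi Hj Uw); apply/eqP; exact: Eq.
exists (perm finj).
rewrite /pseq.
have -> : [seq ((perm finj) i).+1 | i <- enum 'I_n] = [seq nth 0 w (nat_of_ord i) | i : 'I_n <- enum 'I_n].
  apply: eq_map => i; rewrite permE /=.
  have Hi : (i : nat) < size w by rewrite Hs.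
  have := nth_stdp Pw Hi; lia.
rewrite (map_comp (nth 0 w) val) val_enum_ord -Hs; exact: mkseq_nth.
Qed.


Lemma max_ge (w : seq nat) (x : nat) : x \in w -> x <= foldr maxn 0 w.
Proof.
elim: w => [|y w IH] //=; rewrite inE => /orP [/eqP ->|/IH]; lia.
Qed.

Lemma nth_max (w : seq nat) i : i < size w -> nth 0 w i <= foldr maxn 0 w.
Proof. move=> Hi; exact: (max_ge (mem_nth 0 Hi)). Qed.

Lemma ext_nth0 (w : seq nat) : nth 0 (ext w) 0 = (foldr maxn 0 w).+1.
Proof. by []. Qed.

Lemma ext_nthS (w : seq nat) i : i < size w -> nth 0 (ext w) i.+1 = nth 0 w i.
Proof. by move=> Hi; rewrite /ext /= nth_rcons Hi. Qed.

Lemma ext_nthN (w : seq nat) : nth 0 (ext w) (size w).+1 = (foldr maxn 0 w).+1.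
Proof. by rewrite /ext /= nth_rcons ltnn eqxx. Qed.

Definition Dx (w : seq nat) i := nth 0 (ext w) i.+1 < nth 0 (ext w) i.

Lemma D0 (w : seq nat) (d : seq bool) (Hd : size w = (size d).+1) : Dx w 0.
Proof.
rewrite /Dx ext_nth0 ext_nthS; last lia.
have := @nth_max w 0; rewrite Hd => /(_ isT); lia.
Qed.

Lemma Dmid (w : seq nat) (d : seq bool) (Hd : size w = (size d).+1) (Hdesc : forall j, j < size d -> (nth 0 w j.+1 < nth 0 w j) = nth false d j) i : 0 < i <= size d -> Dx w i = nth false d i.-1.
Proof.
move=> Hi; rewrite /Dx ext_nthS; last lia.
have -> : i = i.-1.+1 by lia.
rewrite ext_nthS; last lia. rewrite -Hdesc; last lia. by rewrite -pred_Sn.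
Qed.

Lemma DN (w : seq nat) (d : seq bool) (Hd : size w = (size d).+1) : Dx w (size w) = false.
Proof.
rewrite /Dx ext_nthN.
have -> : size w = (size d).+1 by [].
rewrite ext_nthS; last lia.
have := @nth_max w (size d); rewrite Hd => /(_ (ltnSn _)); lia.
Qed.

Lemma count_shift (P : nat -> bool) m :
  count P (iota 1 m) = count (fun i => P i.+1) (iota 0 m).
Proof. by rewrite -[1]/(1 + 0) iotaDl count_map. Qed.

Lemma des_eq (w : seq nat) (d : seq bool) (Hd : size w = (size d).+1) (Hdesc : forall j, j < size d -> (nth 0 w j.+1 < nth 0 w j) = nth false d j) : des w = count id d.
Proof.
rewrite /des -/(Dx w) Hd -[(size d).+1]addn1 iotaD count_cat /= add1n.
rewrite -Hd (DN Hd) !addn0.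
rewrite count_shift -[d in RHS](mkseq_nth false) /mkseq count_map.
apply: eq_in_count => i; rewrite mem_iota => Hi /=.
by rewrite (Dmid Hd Hdesc) //; lia.
Qed.

Lemma dd_eq (w : seq nat) (d : seq bool) (Hd : size w = (size d).+1) (Hdesc : forall j, j < size d -> (nth 0 w j.+1 < nth 0 w j) = nth false d j) : dd w = 0 <->
  (forall i, i.+1 < size d -> ~ (nth false d i /\ nth false d i.+1)) /\
  (forall b, ohead d = Some b -> b = false).
Proof.
have E : dd w = count (fun i => Dx w i.-1 && Dx w i) (iota 1 (size w)).
  rewrite /dd; apply: eq_in_count => i; rewrite mem_iota => Hi /=.
  by rewrite /Dx; have -> : i.-1.+1 = i by lia.
rewrite E; split.
- move=> /eqP; rewrite eqn0Ngt -has_count => /hasPn H; split.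
  + move=> i Hi [A B].
    have := H i.+2; rewrite mem_iota /= (Dmid Hd Hdesc) ?(Dmid Hd Hdesc) //=; try lia.
  + move=> b Hb.
    have [Hsd hb] : 0 < size d /\ nth false d 0 = b by case: (d) Hb => [|? ?] //= [->].
    have : 1 \in iota 1 (size w) by rewrite mem_iota; lia.
    move/H; rewrite /= (D0 Hd) (Dmid Hd Hdesc) /=; last lia.
    by rewrite hb; case: b {Hb hb}.
- move=> [H1 H2]; apply/eqP; rewrite eqn0Ngt -has_count; apply/hasPn => i.
  rewrite mem_iota => Hi.
  case: (ltngtP i (size w)) => Hiw; [|lia|by rewrite Hiw (DN Hd) andbF].
  case: (ltngtP i 1) => Hi1; first lia.
  + rewrite (Dmid Hd Hdesc) ?(Dmid Hd Hdesc); try lia.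
    apply/negP => /andP [A B]; apply: (H1 (i.-1.-1)); first lia.
    by have -> : i.-1.-1.+1 = i.-1 by lia.
  + subst i; rewrite /= (D0 Hd) (Dmid Hd Hdesc) /=; last lia.
    have Hsd : 0 < size d by lia.
    have hb : ohead d = Some (nth false d 0) by case: (d) Hsd.
    by rewrite (H2 _ hb).
Qed.



Unset Implicit Arguments.
Theorem theorem2p15 (n : nat) (hn : 1 <= n) :
  exists T : 'S_n -> btree,
    (* T maps S_n(2413,3142) into DT_n ... *)
    (forall s, sep_avoid s -> DT n (T s)) /\
    (* ... injectively ... *)
    (forall s1 s2, sep_avoid s1 -> sep_avoid s2 -> T s1 = T s2 -> s1 = s2) /\
    (* ... and onto DT_n *)
    (forall t, DT n t -> exists2 s, sep_avoid s & T s = t) /\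
    (* descents correspond to ominus labels in in-order *)
    (forall s, sep_avoid s -> forall i, 1 <= i <= n.-1 ->
       (nth 0 (pseq s) i.-1 > nth 0 (pseq s) i <->
        nth oplus (inorder (T s)) i.-1 = ominus)) /\
    (* restriction to a bijection S^S_{n,k} -> DT^2_{n,k} *)
    (forall k, k <= n.-1./2 ->
       forall s, sep_avoid s -> (SS k s <-> DT2 n k (T s))).
Proof.
pose T := fun s : 'S_n => epsilon (inhabits Leaf) (fun t => is_disk t /\ sq t = pseq s).
have spec : forall s, sep_avoid s -> is_disk (T s) /\ sq (T s) = pseq s.
  move=> s Hs; apply: (epsilon_spec (inhabits Leaf) (fun t => is_disk t /\ sq t = pseq s)).
  exact: (exists_tree (size_pseq s) hn (pseq_std s) Hs).
have bs : forall s, sep_avoid s -> bsize (T s) = n.-1.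
  move=> s /spec [_ E]; have := congr1 size E; rewrite size_S size_pseq; lia.
exists T; split; [|split; [|split; [|split]]].
- by move=> s Hs; split; [case: (spec s Hs) | exact: bs].
- move=> s1 s2 H1 H2 E; apply: pseq_inj.
  by case: (spec s1 H1) => _ <-; case: (spec s2 H2) => _ <-; rewrite E.
- move=> t [Dt Bt].
  have [s Es] := pseq_surj (n := n) (w := sq t) (ltac:(rewrite size_S Bt; lia)) (stdp_S t).
  have Hs : sep_avoid s by rewrite /sep_avoid Es; exact: avoid_S.
  exists s => //; case: (spec s Hs) => D E.
  by apply: S_inj => //; rewrite E Es.
- move=> s Hs i Hi; case: (spec s Hs) => D E.
  rewrite -E /ominus /oplus.
  have -> : i = i.-1.+1 by lia.
  rewrite -pred_Sn desc_S //; last by rewrite bs //; lia.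
- move=> k _ s Hs; case: (spec s Hs) => D E.
  have Hd : size (pseq s) = (size (inorder (T s))).+1 by rewrite -E size_S size_inorder.
  have Hdesc : forall j, j < size (inorder (T s)) ->
      (nth 0 (pseq s) j.+1 < nth 0 (pseq s) j) = nth false (inorder (T s)) j.
    by move=> j; rewrite -E size_inorder; exact: desc_S.
  have Hn : n_ominus (T s) = count id (inorder (T s)).
    by rewrite /n_ominus; apply: eq_count => b; rewrite /ominus eqb_id.
  rewrite /SS /DT2 (des_eq Hd Hdesc) Hn.
  have DD := dd_eq Hd Hdesc.
  split.
  + move=> [_ [H1 H2]]; have [Ha Hb] := (proj1 DD) H1.
    split; first by split => //; exact: bs.
    by split.
  + move=> [_ [H1 [H2 H3]]]; split => //; split => //; exact: (proj2 DD) (conj H1 H2).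
Qed.
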